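(* Let $C$ be a nonempty finite set of group indices, where each group $i\in C$ has $N_i$ users (a positive integer) with utility $\theta_i\ln(1+s)$, the $\theta_i>0$ being distinct with $\theta_i>\theta_{i'}$ whenever $i<i'$, and let $s^C>0$ be an amount of resource. Consider the single-price problem restricted to $C$: maximize $p\sum_{i\in C}n_is_i$ over $p>0$ and $n_i\in\{0,\dots,N_i\}$, subject to $s_i=(\theta_i/p-1)^+$ for $i\in C$ and $\sum_{i\in C}n_is_i\le s^C$. For $c\in C$ let $p_C(c)=\frac{\sum_{i\in C,i\le c}N_i\theta_i}{s^C+\sum_{i\in C,i\le c}N_i}$, let $K=\max\{c\in C:\theta_c>p_C(c)\}$, and set $N^C=\sum_{i\in C,i\le K}N_i$, $\theta^C=\frac{1}{N^C}\sum_{i\in C,i\le K}N_i\theta_i$. Then the optimal value of this problem equals $\frac{s^C N^C\theta^C}{s^C+N^C}$, which is the optimal single-price revenue, with resource $s^C$, of a single group consisting of $N^C$ users each with utility $\theta^C\ln(1+s)$.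
   Context: A user with utility $\theta\ln(1+s)$ facing unit price $p$ demands $(\theta/p-1)^+$, where $(x)^+=\max(x,0)$. *)

(* Defs.v *)
From HB Require Import structures.
From mathcomp Require Import all_boot all_order all_algebra.
From mathcomp Require Import reals.
Set Implicit Arguments. Unset Strict Implicit. Unset Printing Implicit Defensive.
Import Order.TTheory GRing.Theory Num.Theory.
Local Open Scope ring_scope.

Section Defs.
Variable R : realType.

Definition pos_part (x : R) : R := Num.max x 0.

(* demand of a user with utility theta ln(1+s) at unit price p *)
Definition demand (theta p : R) : R := pos_part (theta / p - 1).

Definition feasible (I : finType) (C : {set I}) (N : I -> nat) (theta : I -> R)
  (s : R) (p : R) (n : I -> nat) : Prop :=
  [/\ 0 < p, (forall i, i \in C -> (n i <= N i)%N) &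
      \sum_(i in C) (n i)%:R * demand (theta i) p <= s].

Definition revenue (I : finType) (C : {set I}) (theta : I -> R) (p : R) (n : I -> nat) : R :=
  p * \sum_(i in C) (n i)%:R * demand (theta i) p.

Definition is_opt_value (I : finType) (C : {set I}) (N : I -> nat) (theta : I -> R)
  (s : R) (v : R) : Prop :=
  (exists p n, feasible C N theta s p n /\ revenue C theta p n = v) /\
  (forall p n, feasible C N theta s p n -> revenue C theta p n <= v).

Definition pC (m : nat) (C : {set 'I_m}) (N : 'I_m -> nat) (theta : 'I_m -> R)
  (s : R) (c : 'I_m) : R :=
  (\sum_(i in C | (i <= c)%N) (N i)%:R * theta i) /
  (s + \sum_(i in C | (i <= c)%N) (N i)%:R).

End Defs.

(* Main.v *)
Require Import Defs.
From HB Require Import structures.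
From mathcomp Require Import all_boot all_order all_algebra.
From mathcomp Require Import reals.
From mathcomp Require Import lra zify.
Import Order.TTheory GRing.Theory Num.Theory.
Local Open Scope ring_scope.

Section Aux.
Variable R : realType.

Lemma dem_ge0 (t p : R) : 0 <= demand t p.
Proof. by rewrite /demand /pos_part le_max lexx orbT. Qed.

Lemma dem_pos (t p : R) : 0 < p -> p < t -> demand t p = t / p - 1.
Proof.
move=> p0 pt; rewrite /demand /pos_part max_l // subr_ge0 ler_pdivlMr //.
by rewrite mul1r ltW.
Qed.

Lemma dem_zero (t p : R) : 0 < p -> t <= p -> demand t p = 0.
Proof.
move=> p0 pt; rewrite /demand /pos_part max_r // subr_le0 ler_pdivrMr //.
by rewrite mul1r.
Qed.

Lemma dem_mono (t p q : R) : 0 < p -> p <= q -> q * demand t q <= p * demand t p.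
Proof.
move=> p0 pq; have q0 : 0 < q by apply: lt_le_trans pq.
case: (leP t q) => tq; first by rewrite dem_zero // mulr0 mulr_ge0 ?dem_ge0 // ltW.
rewrite dem_pos // mulrBr mulr1 mulrC divfK ?gt_eqF //.
have h : t / p - 1 <= demand t p by rewrite /demand /pos_part le_max lexx.
apply: le_trans (ler_wpM2l (ltW p0) h).
rewrite mulrBr mulr1 mulrC divfK ?gt_eqF //; lra.
Qed.

Lemma main_opt m (C : {set 'I_m}) (N : 'I_m -> nat) (theta : 'I_m -> R) (sC : R) (K : 'I_m) :
  (forall i, i \in C -> (0 < N i)%N) ->
  (forall i, i \in C -> 0 < theta i) ->
  (forall i j, i \in C -> j \in C -> (i < j)%N -> theta j < theta i) ->
  0 < sC ->
  K \in C -> pC C N theta sC K < theta K ->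
  (forall c, c \in C -> pC C N theta sC c < theta c -> (c <= K)%N) ->
  is_opt_value C N theta sC (sC * pC C N theta sC K).
Proof.
move=> Npos tpos tdec s0 KC pK Kmax.
set A := \sum_(i in C | (i <= K)%N) (N i)%:R * theta i.
set B := \sum_(i in C | (i <= K)%N) (N i)%:R : R.
have B0 : 0 <= B by apply: sumr_ge0 => i _; rewrite ler0n.
have A0 : 0 < A.
  rewrite /A (bigD1 K) /=; last by rewrite KC leqnn.
  apply: ltr_pwDl; first by rewrite mulr_gt0 ?ltr0n ?Npos ?tpos.
  apply: sumr_ge0 => i /andP [/andP [iC _] _]; rewrite mulr_ge0 ?ler0n //.
  exact: ltW (tpos i iC).
set p := pC C N theta sC K.
have pE : p = A / (sC + B) by [].
have sB0 : 0 < sC + B by lra.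
have p0 : 0 < p by rewrite pE divr_gt0.
have lowK : forall i, i \in C -> (i <= K)%N -> p < theta i.
  move=> i iC iK; apply: lt_le_trans pK _.
  case: (ltngtP i K) iK => // [iK _|/val_inj -> _ //].
  exact: ltW (tdec _ _ iC KC iK).
have highK : forall n (i : 'I_m), (i < n)%N -> i \in C -> (K < i)%N -> theta i <= p.
  elim=> [|n IH] i // hin iC Ki.
  case: (boolP [exists j : 'I_m, [&& j \in C, (K < j)%N & (j < i)%N]]).
    move/existsP=> [j /and3P [jC Kj ji]].
    apply: le_trans (ltW (tdec _ _ jC iC ji)) (IH j _ jC Kj); lia.
  move/existsPn => hno.
  have hsplit : forall F : 'I_m -> R, \sum_(c in C | (c <= i)%N) F c =
      \sum_(c in C | (c <= K)%N) F c + F i.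
    move=> F; rewrite (bigD1 i) /=; last by rewrite iC leqnn.
    rewrite addrC; congr (_ + _); apply: eq_bigl => c.
    case cC: (c \in C) => //=; move: (hno c); rewrite cC /= -(inj_eq val_inj) /=.
    move=> h; apply/idP/idP => [/andP [h1 h2] | h3]; [|apply/andP; split]; lia.
  have : ~~ (pC C N theta sC i < theta i).
    by apply/negP => /(Kmax i iC); lia.
  rewrite -leNgt /pC (hsplit (fun c => (N c)%:R * theta c)) (hsplit (fun c => (N c)%:R)).
  rewrite -/A -/B.
  have Ni0 : 0 < (N i)%:R :> R by rewrite ltr0n Npos.
  rewrite ler_pdivlMr; last by lra.
  rewrite pE ler_pdivlMr // => h; nra.
have high : forall i, i \in C -> (K < i)%N -> theta i <= p.
  by move=> i; apply: highK (ltn_ord i).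
have sumE : \sum_(i in C) (N i)%:R * demand (theta i) p = sC.
  rewrite (bigID (fun i : 'I_m => (i <= K)%N)) /=.
  rewrite [X in _ + X]big1 ?addr0; last first.
    move=> i /andP [iC iK]; rewrite dem_zero ?mulr0 //; apply: high iC _; lia.
  rewrite (eq_bigr (fun i => (N i)%:R * theta i / p - (N i)%:R)); last first.
    by move=> i /andP [iC iK]; rewrite dem_pos ?lowK // mulrBr mulr1 mulrA.
  rewrite sumrB -mulr_suml -/A -/B pE invf_div mulrC divfK ?gt_eqF //.
  lra.
split.
  exists p, N; split; last by rewrite /revenue sumE mulrC.
  by split; [exact: p0 | move=> i _ | rewrite sumE].
move=> q n [q0 nN hs]; rewrite /revenue.
case: (leP q p) => qp.
  apply: le_trans (ler_pM (ltW q0) _ qp hs) _; last by rewrite mulrC.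
  by apply: sumr_ge0 => i _; rewrite mulr_ge0 ?ler0n ?dem_ge0.
rewrite -sumE mulr_sumr mulr_suml; apply: ler_sum => i iC.
suff h : (n i)%:R * (q * demand (theta i) q) <= (N i)%:R * (p * demand (theta i) p).
  by rewrite mulrCA (le_trans h) // [p * _]mulrC mulrA.
apply: ler_pM.
- by rewrite ler0n.
- by rewrite mulr_ge0 ?dem_ge0 // ltW.
- by rewrite ler_nat nN.
- by apply: dem_mono => //; exact: ltW.
Qed.
End Aux.

Theorem lemma1 (R : realType) (m : nat) (C : {set 'I_m}) (N : 'I_m -> nat)
  (theta : 'I_m -> R) (sC : R) (K : 'I_m) :
  C != set0 ->
  (forall i, i \in C -> (0 < N i)%N) ->
  (forall i, i \in C -> 0 < theta i) ->
  (forall i j, i \in C -> j \in C -> (i < j)%N -> theta j < theta i) ->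
  0 < sC ->
  (* K = max { c in C | theta_c > p_C(c) } *)
  K \in C -> pC C N theta sC K < theta K ->
  (forall c, c \in C -> pC C N theta sC c < theta c -> (c <= K)%N) ->
  let NC : nat := (\sum_(i in C | (i <= K)%N) N i)%N in
  let thetaC : R := (NC%:R)^-1 * \sum_(i in C | (i <= K)%N) (N i)%:R * theta i in
  let v : R := sC * NC%:R * thetaC / (sC + NC%:R) in
  is_opt_value C N theta sC v /\
  is_opt_value [set: 'I_1] (fun _ => NC) (fun _ => thetaC) sC v.
Proof.
move=> _ Npos tpos tdec s0 KC pK Kmax NC thetaC v.
set A := \sum_(i in C | (i <= K)%N) (N i)%:R * theta i.
set B := \sum_(i in C | (i <= K)%N) (N i)%:R : R.
have hB : NC%:R = B by rewrite /NC natr_sum.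
have B0 : 0 < B.
  rewrite /B (bigD1 K) /=; last by rewrite KC leqnn.
  apply: ltr_pwDl; first by rewrite ltr0n Npos.
  by apply: sumr_ge0 => i _; rewrite ler0n.
have A0 : 0 < A.
  rewrite /A (bigD1 K) /=; last by rewrite KC leqnn.
  apply: ltr_pwDl; first by rewrite mulr_gt0 ?ltr0n ?Npos ?tpos.
  apply: sumr_ge0 => i /andP [/andP [iC _] _]; rewrite mulr_ge0 ?ler0n //.
  exact: ltW (tpos i iC).
have hNt : NC%:R * thetaC = A by rewrite /thetaC mulrA mulfV ?mul1r // hB gt_eqF.
have pE : pC C N theta sC K = A / (sC + B) by [].
have hv : v = sC * pC C N theta sC K.
  by rewrite /v -(mulrA sC) hNt pE hB mulrA.
rewrite hv; split; first exact: main_opt.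
have hs : forall F : 'I_1 -> R,
    \sum_(i in [set: 'I_1] | (i <= (@ord0 0))%N) F i = F ord0.
  by move=> F; rewrite (big_pred1 ord0) // => j; rewrite in_setT /= (ord1 j) leqnn eqxx.
have pE1 : pC [set: 'I_1] (fun _ => NC) (fun _ => thetaC) sC ord0 = A / (sC + B).
  by rewrite /pC (hs (fun _ => NC%:R * thetaC)) (hs (fun _ => NC%:R)) hNt hB.
have N0 : 0 < NC%:R :> R by rewrite hB.
have tC0 : 0 < thetaC by rewrite -(pmulr_rgt0 _ N0) hNt.
rewrite pE -pE1; apply: main_opt => //.
- by move=> i _; rewrite -(ltr0n R) hB.

- by move=> i j _ _; rewrite (ord1 i) (ord1 j).
- by rewrite in_setT.
- rewrite pE1 ltr_pdivrMr; last by lra.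
  rewrite mulrDr -hNt hB; have : 0 < thetaC * sC.
    by rewrite mulr_gt0.
  rewrite [thetaC * B]mulrC -hB; lra.
- by move=> c _ _; rewrite (ord1 c).
Qed.
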